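(* Consider three agents $[3]=\{1,2,3\}$ and the twelve items $\mathcal{M}=\{(j,k): j\in\{1,2,3\},k\in\{1,2,3,4\}\}$. Let $$B=\begin{pmatrix}1&1&1&1\\1&1&1&1\\1&1&1&1\end{pmatrix},\ O=\begin{pmatrix}17&25&12&1\\2&22&3&28\\11&0&21&23\end{pmatrix},\ E^1=\begin{pmatrix}-3&1&1&1\\0&0&0&0\\0&0&0&0\end{pmatrix},$$ $$E^2=\begin{pmatrix}-3&1&0&0\\1&0&0&0\\1&0&0&0\end{pmatrix},\ E^3=\begin{pmatrix}-3&0&1&0\\0&0&1&0\\0&0&0&1\end{pmatrix},$$ and for $i\in[3]$ let $u_i$ be the additive function with $u_i((j,k))=10^6 B_{jk}+10^3 O_{jk}+E^i_{jk}$. Let $d_i=-u_i$. Then there is no allocation $(S_1,S_2,S_3)\in\Pi_3(\mathcal{M})$ with $d_i(S_i)\ge MmS_{d_i}^3(\mathcal{M})$ for all $i\in[3]$. In particular, an MmS allocation for chores need not exist.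
   Context: $\Pi_3(\mathcal{M})$ is the set of ordered 3-partitions of $\mathcal{M}$ (parts may be empty). For an additive function $v$ on subsets of $\mathcal{M}$, $MmS_{v}^N(\mathcal{M}):=\max_{(S_1,\ldots,S_N)\in\Pi_N(\mathcal{M})}\min_{j} v(S_j)$. An MmS allocation for an instance with utilities $(v_i)$ is an allocation with $v_i(S_i)\ge MmS_{v_i}^N(\mathcal{M})$ for all agents $i$. *)

(* Defs.v *)
From HB Require Import structures.
From mathcomp Require Import all_boot all_order all_algebra.
Set Implicit Arguments. Unset Strict Implicit. Unset Printing Implicit Defensive.
Import Order.TTheory GRing.Theory Num.Theory.
Local Open Scope ring_scope.

(* Items: pairs (j,k), j in {1,2,3} (encoded 'I_3), k in {1,..,4} (encoded 'I_4). *)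
Definition item := ('I_3 * 'I_4)%type.

Definition addv (w : item -> int) (S : {set item}) : int := \sum_(x in S) w x.

(* Ordered N-partitions of the item set (parts may be empty): an item-to-part map. *)
Definition part (N : nat) (P : {ffun item -> 'I_N}) (j : 'I_N) : {set item} :=
  [set x | P x == j].

(* min_j v(S_j) for an ordered N-partition, N >= 1 (parts indexed by 'I_N.-1.+1,
   which is 'I_N for N >= 1; for N = 3 it is convertible to 'I_3). *)
Definition minpart (N : nat) (v : {set item} -> int) (P : {ffun item -> 'I_N.-1.+1}) : int :=
  \big[Num.min/v (part P ord0)]_(j < N.-1.+1) v (part P j).

(* The max over the (nonempty) finite set of partitions is seeded with the
   value of one of its elements; max is idempotent so this is the true max. *)
Definition MmS (N : nat) (v : {set item} -> int) : int :=
  \big[Num.max/@minpart N v [ffun _ => ord0]]_(P : {ffun item -> 'I_N.-1.+1}) @minpart N v P.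

(* Matrices, row j, column k (0-indexed). *)
Definition mat (rows : seq (seq int)) (j : 'I_3) (k : 'I_4) : int :=
  nth 0 (nth [::] rows j) k.

Definition Bm := mat [:: [:: 1; 1; 1; 1]; [:: 1; 1; 1; 1]; [:: 1; 1; 1; 1]].
Definition Om := mat [:: [:: 17; 25; 12; 1]; [:: 2; 22; 3; 28]; [:: 11; 0; 21; 23]].
Definition E1 := mat [:: [:: -3; 1; 1; 1]; [:: 0; 0; 0; 0]; [:: 0; 0; 0; 0]].
Definition E2 := mat [:: [:: -3; 1; 0; 0]; [:: 1; 0; 0; 0]; [:: 1; 0; 0; 0]].
Definition E3 := mat [:: [:: -3; 0; 1; 0]; [:: 0; 0; 1; 0]; [:: 0; 0; 0; 1]].

(* Agent i (0-indexed: 0,1,2 stand for agents 1,2,3). *)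
Definition Em (i : 'I_3) : 'I_3 -> 'I_4 -> int :=
  match val i with 0%N => E1 | 1%N => E2 | _ => E3 end.

Definition uval (i : 'I_3) (x : item) : int :=
  10 ^+ 6 * Bm x.1 x.2 + 10 ^+ 3 * Om x.1 x.2 + Em i x.1 x.2.

Definition u (i : 'I_3) : {set item} -> int := addv (uval i).

Definition d (i : 'I_3) : {set item} -> int := fun S => - u i S.

(* Main.v *)
Require Import Defs.
From HB Require Import structures.
From mathcomp Require Import all_boot all_order all_algebra.
From mathcomp Require Import zify ring.
Import Order.TTheory GRing.Theory Num.Theory.
Local Open Scope ring_scope.

Definition o0 : 'I_3 := @Ordinal 3 0 isT.
Definition o1 : 'I_3 := @Ordinal 3 1 isT.
Definition o2 : 'I_3 := @Ordinal 3 2 isT.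
Definition q0 : 'I_4 := @Ordinal 4 0 isT.
Definition q1 : 'I_4 := @Ordinal 4 1 isT.
Definition q2 : 'I_4 := @Ordinal 4 2 isT.
Definition q3 : 'I_4 := @Ordinal 4 3 isT.

Definition il : seq item :=
  [:: (o0,q0); (o0,q1); (o0,q2); (o0,q3);
      (o1,q0); (o1,q1); (o1,q2); (o1,q3);
      (o2,q0); (o2,q1); (o2,q2); (o2,q3)].

Fixpoint sumL (P : item -> bool) (f : item -> int) (l : seq item) : int :=
  if l is x :: l' then (if P x then f x else 0) + sumL P f l' else 0.

Lemma sumL_big P f l : sumL P f l = \sum_(x <- l | P x) f x.
Proof.
elim: l => [|x l IH] /=; first by rewrite big_nil.
by rewrite big_cons IH; case: (P x); rewrite ?add0r.
Qed.

Lemma mem_il x : x \in il.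
Proof. by case: x => [[[|[|[|i]]] Hi] [[|[|[|[|k]]]] Hk]]. Qed.

Lemma uniq_il : uniq il.
Proof. by []. Qed.

Lemma sum_il (S : {set item}) f : \sum_(x in S) f x = sumL (fun x => x \in S) f il.
Proof.
rewrite sumL_big; apply: perm_big; apply: uniq_perm.
- exact: index_enum_uniq.
- exact: uniq_il.
- by move=> x; rewrite mem_index_enum mem_il.
Qed.

Lemma sumL_eq_in P Q f l : {in l, P =1 Q} -> sumL P f l = sumL Q f l.
Proof.
elim: l => [|x l IH] //= H.
rewrite H ?mem_head //; congr (_ + _); apply: IH => y hy; apply: H.
by rewrite in_cons hy orbT.
Qed.

Definition pb (b : seq bool) (x : item) := nth false b (index x il).

Lemma pb_map (Q : item -> bool) : {in il, pb (map Q il) =1 Q}.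
Proof. by move=> x hx; rewrite /pb (nth_map x) ?index_mem // nth_index. Qed.

Definition Ov (x : item) := Om x.1 x.2.
Definition Ev i (x : item) := Em i x.1 x.2.
Fixpoint sumZ (b : seq bool) (f : item -> int) (l : seq item) : int :=
  match b, l with
  | x :: b', y :: l' => (if x then f y else 0) + sumZ b' f l'
  | _, _ => 0
  end.

Lemma sumZ_map Q f l : sumZ (map Q l) f l = sumL Q f l.
Proof. by elim: l => //= x l ->. Qed.

Definition cnt b := sumZ b (fun _ => 1) il.
Definition osum b := sumZ b Ov il.
Definition esum i b := sumZ b (Ev i) il.

Lemma Bm1 (x : item) : Bm x.1 x.2 = 1.
Proof. by case: x => [[[|[|[|i]]] Hi] [[|[|[|[|k]]]] Hk]]. Qed.

Lemma sumL_uval i P l :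
  sumL P (uval i) l = 10^+6 * sumL P (fun _ => 1) l + 10^+3 * sumL P Ov l + sumL P (Ev i) l.
Proof.
elim: l => [|x l IH] /=; first by rewrite !mulr0 !addr0.
rewrite IH; case: (P x) => /=; last by ring.
rewrite /uval Bm1 /Ov /Ev; ring.
Qed.

Definition bA (A : {ffun item -> 'I_3}) j := map (fun x => A x == j) il.

Lemma u_part A i j :
  u i (part A j) = 10^+6 * cnt (bA A j) + 10^+3 * osum (bA A j) + esum i (bA A j).
Proof.
rewrite /u /Defs.addv sum_il sumL_uval /cnt /osum /esum /bA -!sumZ_map.
by rewrite (@eq_map _ _ (fun x => x \in part A j) (fun x => A x == j)) // => x; rewrite inE.
Qed.

Lemma tot A f :
  sumZ (bA A o0) f il + sumZ (bA A o1) f il + sumZ (bA A o2) f il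
  = sumL predT f il.
Proof.
rewrite /bA !sumZ_map.
elim: il => [|x l IH] //=.
case: (A x) => [[|[|[|m]]] Hm] //= in IH *; lia.
Qed.

Fixpoint bitsn n : seq (seq bool) :=
  if n is n'.+1 then [seq x :: b | x <- [:: true; false], b <- bitsn n'] else [:: [::]].

Lemma mem_bitsn b : b \in bitsn (size b).
Proof.
elim: b => [|x b IH] //=.
by case: x; rewrite mem_cat; [rewrite (map_f _ IH) | rewrite mem_cat (map_f _ IH) orbT].
Qed.

Lemma bA_bits A j : bA A j \in bitsn 12.
Proof. by rewrite -[12%N](size_map (fun x => A x == j) il) mem_bitsn. Qed.

Definition good0 b := [&& cnt b == 4, osum b == 55 & esum o0 b <= 0].
Definition good1 b := [&& cnt b == 4, osum b == 55 & esum o1 b <= 0].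
Definition comp b0 b1 := [seq ~~ p.1 && ~~ p.2 | p <- zip b0 b1].
Definition disj b0 b1 := all2 (fun x y => ~~ (x && y)) b0 b1.
Definition check := all (fun b0 => if good0 b0 then
   all (fun b1 => if good1 b1 && disj b0 b1 then 0 < esum o2 (comp b0 b1) else true) (bitsn 12)
   else true)
  (bitsn 12).
Definition bounds := all (fun b => [&& 0 <= cnt b, 0 <= osum b, -3 <= esum o0 b,
   -3 <= esum o1 b & -3 <= esum o2 b]) (bitsn 12).

Lemma check_ok : check = true.
Proof. vm_compute. reflexivity. Qed.

Lemma bounds_ok : bounds = true.
Proof. vm_compute. reflexivity. Qed.

Lemma comp_bA A : comp (bA A o0) (bA A o1) = bA A o2.
Proof.
rewrite /comp /bA; elim: il => [|x l IH] //=; rewrite IH.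
by case: (A x) => [[|[|[|m]]] Hm].
Qed.

Lemma disj_bA A : disj (bA A o0) (bA A o1).
Proof.
rewrite /disj /bA; elim: il => [|x l IH] //=; rewrite IH andbT.
by case: (A x) => [[|[|[|m]]] Hm].
Qed.

Definition wmap (w : seq 'I_3) j := map (fun x => nth o0 w (index x il) == j) il.
Definition wcheck i w := all (fun j => [&& cnt (wmap w j) == 4, osum (wmap w j) == 55
   & esum i (wmap w j) <= 0]) [:: o0; o1; o2].

Lemma MmS_ge i w : wcheck i w = true -> -(10^+6 * 4 + 10^+3 * 55) <= MmS 3 (d i).
Proof.
move=> hw.
pose P : {ffun item -> 'I_3} := [ffun x => nth o0 w (index x il)].
have hj : forall j, -(10^+6 * 4 + 10^+3 * 55) <= d i (part P j).
  move=> j; rewrite /d u_part.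
  have -> : bA P j = wmap w j by apply: eq_map => x; rewrite ffunE.
  have jin : j \in [:: o0; o1; o2] by case: j => [[|[|[|m]]] Hm].
  move/allP: hw => /(_ j jin) /and3P [/eqP -> /eqP -> he]; lia.
have hm : @minpart 3 (d i) P <= MmS 3 (d i).
  by rewrite /MmS (bigD1 P) //= le_max lexx.
have hl : -(10^+6 * 4 + 10^+3 * 55) <= @minpart 3 (d i) P.
  rewrite /minpart; apply: (big_ind (fun y => _ <= y)) => //.
  by move=> x y hx hy; rewrite le_min hx hy.
exact: le_trans hl hm.
Qed.

Definition w0 := [:: o0; o0; o0; o0; o1; o1; o1; o1; o2; o2; o2; o2].
Definition w1 := [:: o0; o0; o1; o2; o0; o1; o2; o2; o0; o1; o1; o2].
Definition w2 := [:: o0; o1; o0; o2; o1; o2; o0; o1; o2; o1; o2; o0].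

Lemma w0_ok : wcheck o0 w0 = true. Proof. vm_compute. reflexivity. Qed.
Lemma w1_ok : wcheck o1 w1 = true. Proof. vm_compute. reflexivity. Qed.
Lemma w2_ok : wcheck o2 w2 = true. Proof. vm_compute. reflexivity. Qed.

Lemma tot1 : sumL predT (fun _ => 1) il = 12. Proof. by []. Qed.
Lemma tot2 : sumL predT Ov il = 165. Proof. by []. Qed.

Theorem proposition3 :
  ~ exists A : {ffun item -> 'I_3},
      forall i : 'I_3, MmS 3 (d i) <= d i (part A i).
Proof.
move=> [A H].
have h0 := le_trans (@MmS_ge _ _ w0_ok) (H o0).
have h1 := le_trans (@MmS_ge _ _ w1_ok) (H o1).
have h2 := le_trans (@MmS_ge _ _ w2_ok) (H o2).
rewrite /d u_part in h0; rewrite /d u_part in h1; rewrite /d u_part in h2.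
have t1 := tot A (fun _ => 1); rewrite tot1 in t1.
have t2 := tot A Ov; rewrite tot2 in t2.
have := bounds_ok; rewrite /bounds => /allP B.
move: (B _ (bA_bits A o0)) (B _ (bA_bits A o1)) (B _ (bA_bits A o2)).
move=> /and5P [c0 d0 _ _ _] /and5P [c1 d1 _ e1 _] /and5P [c2 d2 _ _ e2].
move: (B _ (bA_bits A o0)) => /and5P [_ _ e0 _ _].
rewrite /cnt /osum /esum in c0 d0 e0 c1 d1 e1 c2 d2 e2 h0 h1 h2 *.
have := check_ok; rewrite /check => /allP /(_ _ (bA_bits A o0)).
have g0 : good0 (bA A o0).
  rewrite /good0 /cnt /osum /esum; apply/and3P; split; try apply/eqP; lia.
rewrite g0 => /allP /(_ _ (bA_bits A o1)).
have g1 : good1 (bA A o1).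
  rewrite /good1 /cnt /osum /esum; apply/and3P; split; try apply/eqP; lia.
rewrite g1 disj_bA comp_bA /= /esum => hlt.
lia.
Qed.
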